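(* Let $\mathcal P,\mathcal Q$ be sets of propositional letters and let $(M,X)$, $(N,Y)$ be team models with $(M,X)\rightleftharpoons_{\mathcal P\cap\mathcal Q}(N,Y)$. Then there is a team model $(K,Z)$ such that $(M,X)\rightleftharpoons_{\mathcal P}(K,Z)$ and $(K,Z)\rightleftharpoons_{\mathcal Q}(N,Y)$.
   Context: A Kripke model is $M=(W,R,V)$ with $W$ nonempty, $R\subseteq W\times W$, $V:W\to\mathcal P(Prop)$; a team model is $(M,X)$ with $X\subseteq W$. For a set $\mathcal P$ of letters, a $\mathcal P$-bisimulation between $M=(W,R,V)$ and $M'=(W',R',V')$ is $B\subseteq W\times W'$ such that for all $(v,v')\in B$: $V(v)\cap\mathcal P=V'(v')\cap\mathcal P$; if $vRu$ there is $u'$ with $v'R'u'$ and $(u,u')\in B$; if $v'R'u'$ there is $u$ with $vRu$ and $(u,u')\in B$. $(M,w)\rightleftharpoons_{\mathcal P}(M',w')$ means some $\mathcal P$-bisimulation contains $(w,w')$. Team models are $\mathcal P$-bisimilar, $(M,X)\rightleftharpoons_{\mathcal P}(N,Y)$, if for every $x\in X$ there is $y\in Y$ with $(M,x)\rightleftharpoons_{\mathcal P}(N,y)$ and for every $y\in Y$ there is $x\in X$ with $(M,x)\rightleftharpoons_{\mathcal P}(N,y)$. *)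

(* Defs.v *)
Record kmodel (Letter : Type) := KModel {
  world : Type;
  world_nonempty : inhabited world;
  rel : world -> world -> Prop;
  val : world -> Letter -> Prop
}.
Arguments world {Letter}.
Arguments rel {Letter}.
Arguments val {Letter}.

Definition letters (Letter : Type) := Letter -> Prop.

Definition is_bisim {Letter : Type} (P : letters Letter)
  (M M' : kmodel Letter) (B : world M -> world M' -> Prop) : Prop :=
  forall v v', B v v' ->
    (forall p, P p -> (val M v p <-> val M' v' p)) /\
    (forall u, rel M v u -> exists u', rel M' v' u' /\ B u u') /\
    (forall u', rel M' v' u' -> exists u, rel M v u /\ B u u').

Definition bisim_pt {Letter : Type} (P : letters Letter)
  (M : kmodel Letter) (w : world M) (M' : kmodel Letter) (w' : world M') : Prop :=
  exists B, is_bisim P M M' B /\ B w w'.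

Definition bisim_team {Letter : Type} (P : letters Letter)
  (M : kmodel Letter) (X : world M -> Prop) (N : kmodel Letter) (Y : world N -> Prop) : Prop :=
  (forall x, X x -> exists y, Y y /\ bisim_pt P M x N y) /\
  (forall y, Y y -> exists x, X x /\ bisim_pt P M x N y).

Definition letters_inter {Letter : Type} (P Q : letters Letter) : letters Letter :=
  fun p => P p /\ Q p.

(* Main.v *)
Require Import Defs.
From Stdlib Require Import Classical.

Section S.
Context (Letter : Type) (P Q : letters Letter) (M N : kmodel Letter).

Definition KW := option {p : world M * world N | bisim_pt (letters_inter P Q) M (fst p) N (snd p)}.

Definition Krel (a b : KW) : Prop :=
  match a, b with
  | Some s, Some t => rel M (fst (proj1_sig s)) (fst (proj1_sig t)) /\
                      rel N (snd (proj1_sig s)) (snd (proj1_sig t))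
  | _, _ => False
  end.

Definition Kval (a : KW) (p : Letter) : Prop :=
  match a with
  | Some s => (P p /\ val M (fst (proj1_sig s)) p) \/ (~ P p /\ val N (snd (proj1_sig s)) p)
  | None => False
  end.

Definition K : kmodel Letter := KModel Letter KW (inhabits None) Krel Kval.

Definition B1 (m : world M) (a : world K) : Prop :=
  match a with Some s => fst (proj1_sig s) = m | None => False end.
Definition B2 (a : world K) (n : world N) : Prop :=
  match a with Some s => snd (proj1_sig s) = n | None => False end.

Lemma B1_bisim : is_bisim P M K B1.
Proof.
  intros m [[[m0 n0] H]|] Hb; simpl in *; [|contradiction]. subst m0.
  split; [|split].
  - intros p Pp; simpl; split; [intros; left; auto|].
    intros [[_ h]|[h _]]; [exact h|contradiction].
  - intros u Hu. destruct H as [B [HB Hmn]].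
    destruct (HB _ _ Hmn) as [_ [F _]]. destruct (F u Hu) as [u' [Hu' Bu]].
    assert (Hs : bisim_pt (letters_inter P Q) M (fst (u,u')) N (snd (u,u')))
      by (exists B; simpl; auto).
    exists (Some (exist _ (u,u') Hs)); simpl; auto.
  - intros [[[u u'] Hs]|] Hr; simpl in *; [|contradiction].
    destruct Hr as [Hu _]. exists u; split; auto.
Qed.

Lemma B2_bisim : is_bisim Q K N B2.
Proof.
  intros [[[m0 n0] H]|] n Hb; simpl in *; [|contradiction]. subst n0.
  split; [|split].
  - intros p Qp; simpl. destruct (classic (P p)) as [Pp|nPp].
    + destruct H as [B [HB Hmn]]. destruct (HB _ _ Hmn) as [V _].
      specialize (V p (conj Pp Qp)). simpl in V.
      split; [intros [[_ h]|[h _]]; [apply V; exact h|contradiction]|].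
      intros h; left; split; auto; apply V; auto.
    + split; [intros [[h _]|[_ h]]; [contradiction|exact h]|].
      intros h; right; auto.
  - intros [[[u u'] Hs]|] Hr; simpl in *; [|contradiction].
    destruct Hr as [_ Hu]. exists u'; split; auto.
  - intros u' Hu'. destruct H as [B [HB Hmn]].
    destruct (HB _ _ Hmn) as [_ [_ G]]. destruct (G u' Hu') as [u [Hu Bu]].
    assert (Hs : bisim_pt (letters_inter P Q) M (fst (u,u')) N (snd (u,u')))
      by (exists B; simpl; auto).
    exists (Some (exist _ (u,u') Hs)); simpl; auto.
Qed.

End S.

Theorem mainTheorem4 (Letter : Type) (P Q : letters Letter)
  (M : kmodel Letter) (X : world M -> Prop)
  (N : kmodel Letter) (Y : world N -> Prop) :
  bisim_team (letters_inter P Q) M X N Y ->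
  exists (K : kmodel Letter) (Z : world K -> Prop),
    bisim_team P M X K Z /\ bisim_team Q K Z N Y.
Proof.
  intros [HX HY].
  exists (K Letter P Q M N).
  exists (fun a : KW Letter P Q M N => match a with
           | Some s => X (fst (proj1_sig s)) /\ Y (snd (proj1_sig s))
           | None => False end).
  split; split.
  - intros x Hx. destruct (HX x Hx) as [y [Hy Hb]].
    exists (Some (exist _ (x,y) Hb)); simpl; split; auto.
    exists (B1 Letter P Q M N); split; [apply B1_bisim|reflexivity].
  - intros [[[m n] Hs]|] Hz; simpl in *; [|contradiction].
    exists m; split; [tauto|].
    exists (B1 Letter P Q M N); split; [apply B1_bisim|reflexivity].
  - intros [[[m n] Hs]|] Hz; simpl in *; [|contradiction].
    exists n; split; [tauto|].
    exists (B2 Letter P Q M N); split; [apply B2_bisim|reflexivity].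
  - intros y Hy. destruct (HY y Hy) as [x [Hx Hb]].
    exists (Some (exist _ (x,y) Hb)); simpl; split; auto.
    exists (B2 Letter P Q M N); split; [apply B2_bisim|reflexivity].
Qed.
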